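(* For the Data Collection process on a fixed connected weighted graph with fixed sink, sources and relative rate vector $\bm{J}$, started from the all-empty state, for every $t\ge0$ and every node $u\in V\setminus\{u_s\}$, the probability $\Pr[Q^\beta_t(u)>0]$ is a non-decreasing function of $\beta$ (over $\beta>0$ with $\beta\bm{J}_v\le1$ for all $v$).
   Context: Data Collection process: on a connected undirected graph $G=(V,E,w)$ with positive weights and $d_u=\sum_{v:(u,v)\in E}w_{uv}$, fix a sink $u_s\in V$ and a set of sources $V_s\subseteq V\setminus\{u_s\}$, with relative rate vector $\bm{J}$ ($\bm{J}_v>0$ for $v\in V_s$, $0$ for other $v\ne u_s$, $\bm{J}_{u_s}=-\sum_{v\ne u_s}\bm{J}_v$) and $\beta>0$ with $\beta\bm{J}_v\le1$. The process with parameter $\beta$ is the discrete-time Markov chain $\{Q^\beta_t\}$ on $(\mathbb{N}\cup\{0\})^{V\setminus\{u_s\}}$ ($Q^\beta_t(v)$ = queue size at $v$) where at each step each $v\in V_s$ independently generates a new packet with probability $\beta\bm{J}_v$ into its queue, and each $u\ne u_s$ with nonempty queue picks one packet and a neighbor $v$ with probability $w_{uv}/d_u$ and transmits the packet to $v$ (added to $v$'s queue if $v\ne u_s$, removed from the system if $v=u_s$). *)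

(* Defs.v *)
(* Data Collection process: exact distribution after t steps,
   as a finite list of (probability, state) pairs. *)
From HB Require Import structures.
From mathcomp Require Import all_boot all_order all_algebra.
Set Implicit Arguments. Unset Strict Implicit. Unset Printing Implicit Defensive.
Import Order.TTheory GRing.Theory Num.Theory.
Local Open Scope ring_scope.

Section DataCollection.
Variables (R : realFieldType) (T : finType).
Variable w : T -> T -> R.      (* edge weights; w u v = 0 iff no edge *)
Variable us : T.
Variable Vs : {set T}.
Variable J : T -> R.
Variable beta : R.

Definition dc_deg (u : T) : R := \sum_(v : T) w u v.

(* a state: queue sizes; the sink entry is kept at 0 *)
Definition dc_state := {ffun T -> nat}.

Definition dc_active (q : dc_state) (u : T) : bool := (u != us) && (0 < q u)%N.

(* one step's random choices: generation bits and chosen neighbours *)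
Definition dc_choice := ({ffun T -> bool} * {ffun T -> T})%type.

Definition dc_gen_prob (v : T) (b : bool) : R :=
  if v \in Vs then (if b then beta * J v else 1 - beta * J v)
  else (if b then 0 else 1).

Definition dc_tgt_prob (q : dc_state) (u x : T) : R :=
  if dc_active q u then w u x / dc_deg u else (if x == u then 1 else 0).

Definition dc_step_prob (q : dc_state) (c : dc_choice) : R :=
  (\prod_(v : T) dc_gen_prob v (c.1 v)) * \prod_(u : T) dc_tgt_prob q u (c.2 u).

Definition dc_next (q : dc_state) (c : dc_choice) : dc_state :=
  [ffun x => if x == us then 0%N else
     (q x + c.1 x - dc_active q x + #|[set u | dc_active q u && (c.2 u == x)]|)%N].

Fixpoint dc_dist (t : nat) : seq (R * dc_state) :=
  match t with
  | 0 => [:: (1, [ffun => 0%N])]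
  | t'.+1 => flatten [seq [seq (x.1 * dc_step_prob x.2 c, dc_next x.2 c)
                           | c <- enum {: dc_choice}] | x <- dc_dist t']
  end.

Definition dc_prob_nonempty (t : nat) (u : T) : R :=
  \sum_(x <- dc_dist t | (0 < x.2 u)%N) x.1.

End DataCollection.

(* Main.v *)
Require Import Defs.
From HB Require Import structures.
From mathcomp Require Import all_boot all_order all_algebra.
From mathcomp Require Import lra zify.
Set Implicit Arguments. Unset Strict Implicit. Unset Printing Implicit Defensive.
Import Order.TTheory GRing.Theory Num.Theory.
Local Open Scope ring_scope.

Definition upd (I X : finType) (h : {ffun I -> X}) (i0 : I) (x : X) : {ffun I -> X} :=
  [ffun i => if i == i0 then x else h i].

Definition swp (I X : finType) (i0 : I) (x y : X) (h : {ffun I -> X}) : {ffun I -> X} :=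
  upd h i0 (if h i0 == x then y else if h i0 == y then x else h i0).

Lemma swp_i0 (I X : finType) (i0 : I) (x y : X) h :
  swp i0 x y h i0 = (if h i0 == x then y else if h i0 == y then x else h i0).
Proof. by rewrite /swp /upd ffunE eqxx. Qed.

Lemma swpK (I X : finType) (i0 : I) (x y : X) : involutive (swp i0 x y).
Proof.
move=> h; apply/ffunP => i; rewrite {1}/swp /upd ffunE.
case: eqP => [->|]; last by rewrite /swp /upd ffunE => /eqP /negPf ->.
rewrite swp_i0.
have [hx|hx] := eqVneq (h i0) x.
  by rewrite hx eqxx; have [->|yx] := eqVneq y x; rewrite ?eqxx.
have [hy|hy] := eqVneq (h i0) y; first by rewrite hy eqxx.
by rewrite (negPf hx) (negPf hy).
Qed.

Lemma sum_coord (R : realFieldType) (I X : finType) (i0 : I) (y : X)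
   (G : {ffun I -> X} -> R) :
  \sum_(h : {ffun I -> X}) G h = \sum_(x : X) \sum_(h : {ffun I -> X} | h i0 == y) G (upd h i0 x).
Proof.
rewrite (partition_big (fun h : {ffun I -> X} => h i0) predT) //=.
apply: eq_bigr => x _.
rewrite (reindex (swp i0 x y)); last by exists (swp i0 x y) => h _; rewrite swpK.
transitivity (\sum_(h : {ffun I -> X} | h i0 == y) G (swp i0 x y h)).
  apply: eq_bigl => h /=; rewrite swp_i0.
  have [hx|hx] := eqVneq (h i0) x.
    by rewrite hx eq_sym.
  have [hy|hy] := eqVneq (h i0) y; first by rewrite eqxx.
  by rewrite (negPf hx).
apply: eq_bigr => h /eqP hy; congr G; apply/ffunP => i.
rewrite /swp /upd !ffunE hy eqxx.
by have [->|yx] := eqVneq y x.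
Qed.

Lemma sum_split1 (R : realFieldType) (I X : finType) (i0 : I) (y0 : X)
   (b : I -> X -> R) (F : {ffun I -> X} -> R) :
  \sum_(h : {ffun I -> X}) (\prod_i b i (h i)) * F h =
  \sum_x b i0 x * \sum_(h : {ffun I -> X} | h i0 == y0)
        (\prod_(i | i != i0) b i (h i)) * F (upd h i0 x).
Proof.
rewrite (sum_coord i0 y0); apply: eq_bigr => x _; rewrite mulr_sumr.
apply: eq_bigr => h _.
rewrite (bigD1 i0) //= {1}/upd ffunE eqxx !mulrA; congr (_ * _ * _).
by apply: eq_bigr => i ni; rewrite /upd ffunE (negPf ni).
Qed.

Lemma marg1 (R : realFieldType) (I X : finType) (i0 : I) (y0 : X)
   (a a' : I -> X -> R) (F : {ffun I -> X} -> R) :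
  (forall i, i != i0 -> forall x, a i x = a' i x) ->
  \sum_x a i0 x = \sum_x a' i0 x ->
  (forall h x, F (upd h i0 x) = F h) ->
  \sum_(h : {ffun I -> X}) (\prod_i a i (h i)) * F h = \sum_(h : {ffun I -> X}) (\prod_i a' i (h i)) * F h.
Proof.
move=> Ha Hm HF; rewrite !(sum_split1 i0 y0).
under eq_bigr do under eq_bigr do rewrite HF.
under [RHS]eq_bigr do under eq_bigr do rewrite HF.
rewrite -!mulr_suml Hm; congr (_ * _); apply: eq_bigr => h _; congr (_ * _).
by apply: eq_bigr => i ni; exact: Ha.
Qed.

Lemma margL (R : realFieldType) (I X : finType) (y0 : X)
   (F : {ffun I -> X} -> R) (s : seq I) :
  forall a a' : I -> X -> R,
  (forall i, i \notin s -> forall x, a i x = a' i x) ->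
  (forall i, i \in s -> (forall x, a i x = a' i x) \/
      (\sum_x a i x = \sum_x a' i x /\ forall h x, F (upd h i x) = F h)) ->
  \sum_(h : {ffun I -> X}) (\prod_i a i (h i)) * F h = \sum_(h : {ffun I -> X}) (\prod_i a' i (h i)) * F h.
Proof.
elim: s => [|i0 s IH] a a' Hout Hin.
  by apply: eq_bigr => h _; congr (_ * _); apply: eq_bigr => i _; exact: Hout.
pose a'' := fun i => if i == i0 then a' i else a i.
transitivity (\sum_(h : {ffun I -> X}) (\prod_i a'' i (h i)) * F h).
  have [Heq|[Hm HF]] := Hin i0 (mem_head _ _).
    apply: eq_bigr => h _; congr (_ * _); apply: eq_bigr => i _.
    by rewrite /a''; case: eqP => // ->.
  apply: (@marg1 _ _ _ i0 y0 a a'') => //; last by rewrite /a'' eqxx.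
  by move=> i ni x; rewrite /a'' (negPf ni).
apply: IH.
  move=> i ni x; rewrite /a''; case: eqP => // /eqP ne.
  by apply: Hout; rewrite in_cons negb_or ne.
move=> i is_; rewrite /a''; case: eqP => [_|ne]; first by left.
by apply: Hin; rewrite in_cons is_ orbT.
Qed.

Lemma stoch1 (R : realFieldType) (I : finType) (i0 : I)
   (a a' : I -> bool -> R) (G : {ffun I -> bool} -> R) :
  (forall i, i != i0 -> forall x, a i x = a' i x) ->
  (forall i x, 0 <= a i x) ->
  a i0 true <= a' i0 true -> a i0 true + a i0 false = a' i0 true + a' i0 false ->
  (forall h, G (upd h i0 false) <= G (upd h i0 true)) ->
  \sum_(h : {ffun I -> bool}) (\prod_i a i (h i)) * G h <= \sum_(h : {ffun I -> bool}) (\prod_i a' i (h i)) * G h.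
Proof.
move=> Ha H0 Ht Hm HG; rewrite !(sum_split1 i0 false) !big_bool /=.
set K := fun (b : I -> bool -> R) (x : bool) => \sum_(h : {ffun I -> bool} | h i0 == false)
    (\prod_(i | i != i0) b i (h i)) * G (upd h i0 x).
have KK : forall x, K a x = K a' x.
  move=> x; apply: eq_bigr => h _; congr (_ * _).
  by apply: eq_bigr => i ni; exact: Ha.
rewrite -/(K a true) -/(K a false) -/(K a' true) -/(K a' false) !KK.
have Hle : K a' false <= K a' true.
  rewrite -!KK; apply: ler_sum => h _; apply: ler_wpM2l => //.
  by apply: prodr_ge0 => i _.
nra.
Qed.

Lemma stochL (R : realFieldType) (I : finType) (G : {ffun I -> bool} -> R)
   (s : seq I) :
  forall a a' : I -> bool -> R,
  (forall i, i \notin s -> forall x, a i x = a' i x) ->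
  (forall i x, 0 <= a i x) -> (forall i x, 0 <= a' i x) ->
  (forall i, i \in s -> a i true <= a' i true /\
       a i true + a i false = a' i true + a' i false) ->
  (forall h i, G (upd h i false) <= G (upd h i true)) ->
  \sum_(h : {ffun I -> bool}) (\prod_i a i (h i)) * G h <= \sum_(h : {ffun I -> bool}) (\prod_i a' i (h i)) * G h.
Proof.
elim: s => [|i0 s IH] a a' Hout H0 H0' Hin HG.
  rewrite le_eqVlt; apply/orP; left; apply/eqP.
  by apply: eq_bigr => h _; congr (_ * _); apply: eq_bigr => i _; exact: Hout.
pose a'' := fun i => if i == i0 then a' i else a i.
have H0'' : forall i x, 0 <= a'' i x by move=> i x; rewrite /a''; case: eqP.
apply: (@le_trans _ _ (\sum_(h : {ffun I -> bool}) (\prod_i a'' i (h i)) * G h)).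
  have [Ht Hm] := Hin i0 (mem_head _ _).
  apply: (stoch1 (i0 := i0)) => //; rewrite ?/a'' ?eqxx //.
  by move=> i ni x; rewrite (negPf ni).
apply: IH => //.
  move=> i ni x; rewrite /a''; case: eqP => // /eqP ne.
  by apply: Hout; rewrite in_cons negb_or ne.
move=> i is_; rewrite /a''; case: eqP => [_|ne]; first by split.
by apply: Hin; rewrite in_cons is_ orbT.
Qed.

Definition Ed (R : realFieldType) (T : finType) (d : seq (R * dc_state T))
  (f : dc_state T -> R) : R := \sum_(x <- d) x.1 * f x.2.

Definition gstep (R : realFieldType) (T : finType) (w : T -> T -> R) us Vs J
  (beta : R) (f : dc_state T -> R) (q : dc_state T) : R :=
  \sum_(c : dc_choice T) dc_step_prob w us Vs J beta q c * f (dc_next us q c).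

Definition rk (R : realFieldType) (T : finType) (w : T -> T -> R) (us u x : T) : R :=
  if u == us then (if x == u then 1 else 0) else w u x / dc_deg w u.

Definition Gb (R : realFieldType) (T : finType) (w : T -> T -> R) (us : T)
  (f : dc_state T -> R) (q : dc_state T) (b : {ffun T -> bool}) : R :=
  \sum_(h : {ffun T -> T}) (\prod_u rk w us u (h u)) * f (dc_next us q (b, h)).

Definition monof (R : realFieldType) (T : finType) (f : dc_state T -> R) :=
  forall q q' : dc_state T, (forall x, q x <= q' x)%N -> f q <= f q'.

Lemma dist_succ (R : realFieldType) (T : finType) (w : T -> T -> R) us Vs J beta t f :
  Ed (dc_dist w us Vs J beta t.+1) f = Ed (dc_dist w us Vs J beta t) (gstep w us Vs J beta f).
Proof.
rewrite /Ed /= big_flatten /= big_map; apply: eq_bigr => x _.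
rewrite big_map big_enum /= /gstep mulr_sumr; apply: eq_bigr => c _.
by rewrite mulrA.
Qed.

Lemma deg_pos (R : realFieldType) (T : finType) (w : T -> T -> R) (us u : T) :
  (forall u v, 0 <= w u v) ->
  (forall u v, connect [rel x y | 0 < w x y] u v) -> u != us -> 0 < dc_deg w u.
Proof.
move=> Hw Hc nu; have /connectP [p] := Hc u us.
case: p => [|y p] /=; first by move=> _ eu; rewrite eu eqxx in nu.
move=> /andP [wy _] _.
rewrite /dc_deg (bigD1 y) //=.
have : 0 <= \sum_(i | i != y) w u i by apply: sumr_ge0.
lra.
Qed.

Lemma next_mono (T : finType) (us : T) (q q' : dc_state T) (b b' : {ffun T -> bool}) h :
  (forall x, q x <= q' x)%N -> (forall x, b x <= b' x)%N ->
  forall x, (dc_next us q (b, h) x <= dc_next us q' (b', h) x)%N.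
Proof.
move=> Hq Hb x; rewrite /dc_next !ffunE; case: eqP => // /eqP nx /=.
apply: leq_add.
  rewrite /dc_active nx /=.
  move: (Hq x) (Hb x); case: (ltnP 0 (q x)) => h1; case: (ltnP 0 (q' x)) => h2 /=; lia.
apply: subset_leq_card; apply/subsetP => u; rewrite !inE => /andP [a e].
rewrite e andbT; move: a; rewrite /dc_active => /andP [-> p] /=.
exact: leq_trans p (Hq u).
Qed.

Lemma next_inv (T : finType) (us : T) (q : dc_state T) b h u y :
  ~~ dc_active us q u -> dc_next us q (b, upd h u y) = dc_next us q (b, h).
Proof.
move=> na; apply/ffunP => x; rewrite !ffunE /=; case: eqP => // _; congr (_ + _)%N.
apply: eq_card => v; rewrite !inE /upd ffunE.
by have [->|] := eqVneq v u; rewrite ?(negPf na).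
Qed.

Lemma g_form (R : realFieldType) (T : finType) (w : T -> T -> R) us Vs J beta f q :
  (forall u v, 0 <= w u v) ->
  (forall u v, connect [rel x y | 0 < w x y] u v) ->
  gstep w us Vs J beta f q =
  \sum_(b : {ffun T -> bool}) (\prod_v dc_gen_prob Vs J beta v (b v)) * Gb w us f q b.
Proof.
move=> Hw Hc.
transitivity (\sum_(b : {ffun T -> bool}) \sum_(h : {ffun T -> T})
   dc_step_prob w us Vs J beta q (b, h) * f (dc_next us q (b, h))).
  by rewrite /gstep (pair_bigA _ (fun b h => dc_step_prob w us Vs J beta q (b, h) * f (dc_next us q (b, h)))).
apply: eq_bigr => b _; rewrite /dc_step_prob /=.
under eq_bigr do rewrite -mulrA; rewrite -mulr_sumr; congr (_ * _).
rewrite /Gb; apply: (margL us (s := enum T)).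
  by move=> i; rewrite mem_enum.
move=> u _.
case Ha: (dc_active us q u).
  left => x; rewrite /dc_tgt_prob /rk Ha.
  by move: Ha; rewrite /dc_active => /andP [/negPf -> _].
have [eu|nu] := eqVneq u us.
  by left => x; rewrite /dc_tgt_prob /rk Ha eu eqxx.
right; split; last by move=> h y; rewrite next_inv ?Ha.
rewrite /dc_tgt_prob /rk Ha (negPf nu).
rewrite -big_mkcond /= big_pred1_eq -mulr_suml divff //.
by rewrite gt_eqF // (deg_pos (us := us)).
Qed.

Lemma rk_ge0 (R : realFieldType) (T : finType) (w : T -> T -> R) us u x :
  (forall u v, 0 <= w u v) -> 0 <= rk w us u x.
Proof.
move=> Hw; rewrite /rk; case: ifP => _; first by case: ifP.
by apply: divr_ge0 => //; apply: sumr_ge0.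
Qed.

Lemma g_mono (R : realFieldType) (T : finType) (w : T -> T -> R) us Vs J beta f :
  (forall u v, 0 <= w u v) ->
  (forall u v, connect [rel x y | 0 < w x y] u v) ->
  (forall v b, 0 <= dc_gen_prob Vs J beta v b) ->
  monof f -> monof (gstep w us Vs J beta f).
Proof.
move=> Hw Hc Hg Hf q q' Hq; rewrite !g_form //; apply: ler_sum => b _.
apply: ler_wpM2l; first by apply: prodr_ge0.
rewrite /Gb; apply: ler_sum => h _; apply: ler_wpM2l.
  by apply: prodr_ge0 => u _; apply: rk_ge0.
by apply: Hf => x; apply: next_mono.
Qed.

Lemma g_beta (R : realFieldType) (T : finType) (w : T -> T -> R) us Vs J b1 b2 f q :
  (forall u v, 0 <= w u v) ->
  (forall u v, connect [rel x y | 0 < w x y] u v) ->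
  (forall v b, 0 <= dc_gen_prob Vs J b1 v b) ->
  (forall v b, 0 <= dc_gen_prob Vs J b2 v b) ->
  (forall v, v \in Vs -> b1 * J v <= b2 * J v) ->
  monof f -> gstep w us Vs J b1 f q <= gstep w us Vs J b2 f q.
Proof.
move=> Hw Hc Hg1 Hg2 Hb Hf; rewrite !g_form //.
apply: (stochL (s := enum T)) => //.
- by move=> i; rewrite mem_enum.
- move=> v _; rewrite /dc_gen_prob; case: ifP => vV; last by split => //.
  by split; [exact: Hb | lra].
- move=> b v; rewrite /Gb; apply: ler_sum => h _; apply: ler_wpM2l.
    by apply: prodr_ge0 => u _; apply: rk_ge0.
  apply: Hf => x; apply: next_mono => // y.
  by rewrite /upd !ffunE; case: eqP.
Qed.

Lemma dist_ge0 (R : realFieldType) (T : finType) (w : T -> T -> R) us Vs J beta :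
  (forall u v, 0 <= w u v) ->
  (forall v b, 0 <= dc_gen_prob Vs J beta v b) ->
  forall t x, x \in dc_dist w us Vs J beta t -> 0 <= x.1.
Proof.
move=> Hw Hg; elim => [|t IH] x /=; first by rewrite mem_seq1 => /eqP ->.
move=> /flattenP [s /mapP [y Hy ->]] /mapP [c _ ->] /=.
apply: mulr_ge0; first exact: IH.
apply: mulr_ge0; apply: prodr_ge0 => // u _.
rewrite /dc_tgt_prob; case: ifP => _; last by case: ifP.
by apply: divr_ge0 => //; apply: sumr_ge0.
Qed.

Lemma mainE (R : realFieldType) (T : finType) (w : T -> T -> R) us Vs J b1 b2 :
  (forall u v, 0 <= w u v) ->
  (forall u v, connect [rel x y | 0 < w x y] u v) ->
  (forall v b, 0 <= dc_gen_prob Vs J b1 v b) ->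
  (forall v b, 0 <= dc_gen_prob Vs J b2 v b) ->
  (forall v, v \in Vs -> b1 * J v <= b2 * J v) ->
  forall t f, monof f ->
  Ed (dc_dist w us Vs J b1 t) f <= Ed (dc_dist w us Vs J b2 t) f.
Proof.
move=> Hw Hc Hg1 Hg2 Hb; elim => [|t IH] f Hf; first exact: lexx.
rewrite !dist_succ.
apply: (@le_trans _ _ (Ed (dc_dist w us Vs J b1 t) (gstep w us Vs J b2 f))).
  rewrite /Ed big_seq [X in _ <= X]big_seq; apply: ler_sum => x xin.
  apply: ler_wpM2l; first exact: (dist_ge0 Hw Hg1 xin).
  exact: g_beta.
by apply: IH; apply: g_mono.
Qed.

Theorem claim3 (R : realFieldType) (T : finType) (w : T -> T -> R)
    (us : T) (Vs : {set T}) (J : T -> R) :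
  (forall u v, w u v = w v u) ->
  (forall u v, 0 <= w u v) ->
  (forall u v, connect [rel x y | 0 < w x y] u v) ->
  us \notin Vs ->
  (forall v, v \in Vs -> 0 < J v) ->
  (forall v, v \notin Vs -> v != us -> J v = 0) ->
  J us = - \sum_(v | v != us) J v ->
  forall (t : nat) (u : T), u != us ->
  forall beta1 beta2 : R,
    0 < beta1 -> beta1 <= beta2 ->
    (forall v, beta1 * J v <= 1) -> (forall v, beta2 * J v <= 1) ->
    dc_prob_nonempty w us Vs J beta1 t u <= dc_prob_nonempty w us Vs J beta2 t u.
Proof.
move=> _ Hw Hc _ HJ _ _ t u _ b1 b2 b1p b12 Hb1 Hb2.
have Hg : forall b, 0 < b -> (forall v, b * J v <= 1) ->
    forall v x, 0 <= dc_gen_prob Vs J b v x.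
  move=> b bp Hb v x; rewrite /dc_gen_prob; case: ifP => vV; last by case: x.
  have := HJ v vV; have := Hb v; case: x => ? ?; nra.
have b2p : 0 < b2 by apply: lt_le_trans b12.
have := @mainE R T w us Vs J b1 b2 Hw Hc (Hg _ b1p Hb1) (Hg _ b2p Hb2) _ t
   (fun q => if (0 < q u)%N then 1 else 0).
have E : forall d : seq (R * dc_state T),
    \sum_(x <- d | (0 < x.2 u)%N) x.1 =
    \sum_(x <- d) x.1 * (if (0 < x.2 u)%N then 1 else 0).
  by move=> d; rewrite big_mkcond; apply: eq_bigr => x _; case: ifP; rewrite ?mulr1 ?mulr0.
rewrite /dc_prob_nonempty !E; apply.
- move=> v vV; have := HJ v vV; nra.
- move=> q q' Hq; case: ifP => h1; last by case: ifP.
  by rewrite (leq_trans h1 (Hq u)).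
Qed.
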